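(* Every cubic (3-regular) graph $G$ of order $6$ (namely the complete bipartite graph $K_{3,3}$ and the triangular prism $K_3\square K_2$) satisfies $\mathcal{C}_f(G)=6$.
   Context: All graphs are finite and simple; $G=(V,E)$, $N(v)$ is the open neighborhood of $v$. A dominating set is $D\subseteq V$ such that every vertex of $V\setminus D$ has a neighbor in $D$. For an integer $k\geq 1$, a $k$-fair dominating set is a dominating set $D$ such that $|N(v)\cap D|=k$ for every $v\in V\setminus D$. A fair dominating set is a $k$-fair dominating set for some integer $k\geq 1$. A fair coalition consists of two disjoint sets $A_1,A_2\subseteq V$, neither of which is a fair dominating set, such that $A_1\cup A_2$ is a fair dominating set. A fair coalition partition ($fc$-partition) of $G$ is a partition $\Upsilon=\{A_1,\dots,A_k\}$ of $V$ such that every $A_i$ is either a singleton fair dominating set of $G$, or is not a fair dominating set and forms a fair coalition with some other non-fair-dominating set $A_j\in\Upsilon$. The fair coalition number $\mathcal{C}_f(G)$ is the maximum number of parts of an $fc$-partition of $G$. *)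

(* Defs.v *)
From mathcomp Require Import all_boot all_order.
Set Implicit Arguments. Unset Strict Implicit. Unset Printing Implicit Defensive.

Section FairCoalition.
Variables (T : finType) (e : rel T).

Definition nbhd (v : T) : {set T} := [set u | e v u].

Definition dominating (D : {set T}) : bool :=
  [forall v, (v \notin D) ==> [exists u, (u \in D) && e v u]].

Definition kfair_dominating (k : nat) (D : {set T}) : bool :=
  dominating D && [forall v, (v \notin D) ==> (#|nbhd v :&: D| == k)].

(* fair dominating set: k-fair for some k >= 1 (k <= #|T| w.l.o.g.) *)
Definition fair_dominating (D : {set T}) : bool :=
  [exists k : 'I_#|T|.+1, (1 <= k) && kfair_dominating k D].

Definition fair_coalition (A B : {set T}) : bool :=
  [disjoint A & B] && ~~ fair_dominating A && ~~ fair_dominating B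
  && fair_dominating (A :|: B).

Definition fc_partition (P : {set {set T}}) : bool :=
  partition P [set: T] &&
  [forall A in P,
     (fair_dominating A && (#|A| == 1))
     || (~~ fair_dominating A &&
         [exists B in P, (B != A) && fair_coalition A B])].

Definition fair_coalition_number : nat :=
  \max_(P : {set {set T}} | fc_partition P) #|P|.

End FairCoalition.

Definition simple_graph (T : finType) (e : rel T) : Prop :=
  symmetric e /\ irreflexive e.

Definition cubic (T : finType) (e : rel T) : Prop :=
  forall v : T, #|nbhd e v| = 3.

(* Main.v *)
Require Import Defs.
From mathcomp Require Import all_boot all_order.
From mathcomp Require Import zify.
Set Implicit Arguments. Unset Strict Implicit. Unset Printing Implicit Defensive.

Section S.
Variables (T : finType) (e : rel T).
Hypothesis esym : symmetric e.
Hypothesis eirr : irreflexive e.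
Hypothesis ecub : forall v : T, #|nbhd e v| = 3.
Hypothesis card6 : #|T| = 6.

Lemma inN v w : (w \in nbhd e v) = e v w.
Proof. by rewrite inE. Qed.

Lemma part_le (P : {set {set T}}) : partition P [set: T] -> #|P| <= 6.
Proof.
move=> hP; have := card_partition hP; rewrite cardsT card6 => ->.
rewrite -sum1_card; apply: leq_sum => A AP.
case/and3P: hP => _ _ h0; rewrite card_gt0; apply: contraNneq h0 => <-; done.
Qed.

Lemma single_not_fd x : ~~ fair_dominating e [set x].
Proof.
apply/negP => /existsP [k /andP [_ /andP [/forallP hd _]]].
have hlt : #|x |: nbhd e x| < #|T|.
  by rewrite card6 cardsU1 ecub; case: (x \notin _).
have [w hw] : exists w, w \notin x |: nbhd e x.
  apply/existsP; rewrite -negb_forall; apply/negP => /forallP hall.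
  move: hlt; rewrite -cardsT; suff -> : x |: nbhd e x = [set: T] by rewrite ltnn.
  by apply/setP => y; rewrite in_setT hall.
move: hw; rewrite !inE negb_or => /andP [wx nxw].
move: (hd w); rewrite inE wx /= => /existsP [u /andP]; rewrite inE => -[/eqP -> ewx].
by rewrite esym ewx in nxw.
Qed.

Lemma key x : exists u, e x u /\ nbhd e x :&: nbhd e u = set0.
Proof.
set S := nbhd e x.
suff : [exists u, e x u && (S :&: nbhd e u == set0)].
  by case/existsP => u /andP [h1 /eqP h2]; exists u.
apply: contraT => /existsPn hall.
have hs : forall u, u \in S -> exists2 s, s \in S & e u s.
  move=> u uS; move: (hall u); rewrite negb_and -inN uS /= => /set0Pn [s].
  rewrite !inE => /andP [xs us].
  by exists s; rewrite ?inN.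
set R := ~: (x |: S).
have cR : #|R| = 2.
  have := cardsC (x |: S); rewrite -/R cardsU1 ecub card6.
  have -> : x \notin S by rewrite inN eirr.
  by move=> h; apply/eqP; rewrite -(eqn_add2l 4) h.
have hRS : forall r, r \in R -> 2 <= #|nbhd e r :&: S|.
  move=> r rR.
  have sub : nbhd e r \subset S :|: (R :\ r).
    apply/subsetP => w; rewrite inN !inE => erw.
    case: (boolP (e x w)) => //= nxw.
    rewrite (_ : w != r); last by apply: contraTneq erw => ->; rewrite eirr.
    rewrite /= orbF; apply: contraTneq erw => ->; move: rR.
    by rewrite !inE negb_or esym => /andP [_].
  have h1 : #|R :\ r| = 1 by move: (cardsD1 r R); rewrite rR cR /=; lia.
  have : nbhd e r \subset (nbhd e r :&: S) :|: (R :\ r).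
    apply/subsetP => w wN; move/subsetP: sub => /(_ w wN); rewrite !inE; move: wN; rewrite inE => -> /=.
    done.
  move/subset_leq_card; rewrite ecub => h4.
  move: (cardsUI (nbhd e r :&: S) (R :\ r)); rewrite h1; lia.
have cR2 : #|R| == 2 by rewrite cR.
case/cards2P: cR2 => r1 [r2 [r12 Rdef]].
have r1R : r1 \in R by rewrite Rdef !inE eqxx.
have r2R : r2 \in R by rewrite Rdef !inE eqxx orbT.
have : (nbhd e r1 :&: S) :&: (nbhd e r2 :&: S) != set0.
  rewrite -card_gt0; have := cardsUI (nbhd e r1 :&: S) (nbhd e r2 :&: S).
  have : #|(nbhd e r1 :&: S) :|: (nbhd e r2 :&: S)| <= 3.
    rewrite -(ecub x) subset_leq_card //; apply/subsetP => w; rewrite !inE.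
    by case/orP => /andP [].
  move: (hRS _ r1R) (hRS _ r2R); lia.
case/set0Pn => u; rewrite !inE => /andP [/andP [r1u uS'] /andP [r2u _]].
have uS : u \in S by rewrite inN.
case: (hs u uS) => s sS eus.
have : 4 <= #|nbhd e u|; last by rewrite ecub.
have sub : [set x; s] :|: R \subset nbhd e u.
  apply/subsetP => w; rewrite Rdef !inE => /orP [/orP [] | /orP []] /eqP ->.
  - by rewrite esym.
  - by [].
  - by rewrite esym.
  - by rewrite esym.
apply: leq_trans (subset_leq_card sub).
have hI : [set x; s] :&: R = set0.
  apply/setP => w; rewrite Rdef !inE; apply/negP => /andP [/orP [] /eqP -> ].
  - move=> h; have : x \in R by rewrite Rdef !inE.
    by rewrite /R !inE eqxx.
  - move=> h; have : s \in R by rewrite Rdef !inE.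
    by rewrite /R !inE; move: sS; rewrite inE => ->; rewrite orbT.
have xs : x != s by apply: contraTneq sS => <-; rewrite inN eirr.
move: (cardsUI [set x; s] R); rewrite hI cards0 cR cards2 xs; lia.
Qed.

Lemma fd_pair x u : e x u -> nbhd e x :&: nbhd e u = set0 ->
  fair_dominating e ([set x] :|: [set u]).
Proof.
move=> exu hI.
have hU : nbhd e x :|: nbhd e u = [set: T].
  apply/eqP; rewrite eqEcard subsetT cardsT card6.
  by move: (cardsUI (nbhd e x) (nbhd e u)); rewrite hI cards0 !ecub; lia.
have hw : forall w, w != x -> w != u -> #|nbhd e w :&: ([set x] :|: [set u])| = 1.
  move=> w wx wu.
  have : w \in nbhd e x :|: nbhd e u by rewrite hU inE.
  rewrite inE !inN => /orP [] h.
  - have -> : nbhd e w :&: ([set x] :|: [set u]) = [set x].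
      apply/setP => y; rewrite !inE; case: (eqVneq y x) => [->|yx] /=.
        by rewrite esym h.
      apply/negP => /andP [ewy /eqP yu]; subst y.
      have : w \in nbhd e x :&: nbhd e u by rewrite !inE h esym ewy.
      by rewrite hI inE.
    by rewrite cards1.
  - have -> : nbhd e w :&: ([set x] :|: [set u]) = [set u].
      apply/setP => y; rewrite !inE; case: (eqVneq y u) => [->|yu] /=.
        by rewrite esym h orbT.
      rewrite orbF; apply/negP => /andP [ewy /eqP yx]; subst y.
      have : w \in nbhd e x :&: nbhd e u by rewrite !inE h esym ewy.
      by rewrite hI inE.
    by rewrite cards1.
apply/existsP; exists (inord 1); rewrite inordK ?card6 //= /kfair_dominating.
have hw' : forall w, w \notin [set x] :|: [set u] ->
    #|nbhd e w :&: ([set x] :|: [set u])| = 1.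
  by move=> w; rewrite !inE negb_or => /andP [] ; apply: hw.
apply/andP; split.
- apply/forallP => w; apply/implyP => /hw' h.
  have : 0 < #|nbhd e w :&: ([set x] :|: [set u])| by rewrite h.
  case/card_gt0P => y; rewrite !inE => /andP [ewy yin].
  by apply/existsP; exists y; rewrite !inE yin ewy.
- by apply/forallP => w; apply/implyP => /hw' ->.
Qed.

End S.

Theorem theorem3p1 (T : finType) (e : rel T) :
  simple_graph e -> cubic e -> #|T| = 6 ->
  fair_coalition_number e = 6.
Proof.
move=> [esym eirr] ecub c6.
apply/eqP; rewrite eqn_leq; apply/andP; split.
  apply/bigmax_leqP => P /andP [hP _]. exact (part_le c6 hP).
set P0 := [set [set x] | x : T].
have cP0 : #|P0| = 6 by rewrite card_imset ?c6 // => a b; apply: set1_inj.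
suff HP0 : fc_partition e P0.
  rewrite /fair_coalition_number.
  by move: (@leq_bigmax_cond _ (fc_partition e) (fun P : {set {set T}} => #|P|) P0 HP0); rewrite cP0.
apply/andP; split.
- apply/and3P; split.
  + apply/eqP/setP => y; rewrite inE; apply/bigcupP; exists [set y].
      by apply/imsetP; exists y.
    by rewrite inE.
  + apply/trivIsetP => A B /imsetP [a _ ->] /imsetP [b _ ->] hab.
    rewrite -setI_eq0; apply/eqP/setP => y; rewrite !inE.
    apply/negP => /andP [/eqP -> /eqP ab]; by rewrite ab eqxx in hab.
  + by apply/imsetP => -[y _] h; have := cards1 y; rewrite -h cards0.
- apply/forallP => A; apply/implyP => /imsetP [x _ ->].
  rewrite (negbTE (single_not_fd esym ecub c6 x)) /=.
  case: (key esym eirr ecub c6 x) => u [exu hI].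
  have xu : x != u by apply: contraTneq exu => ->; rewrite eirr.
  apply/existsP; exists [set u]; apply/andP; split; first by apply/imsetP; exists u.
  rewrite (inj_eq set1_inj) eq_sym xu /=.
  rewrite /fair_coalition (single_not_fd esym ecub c6) /=.
  rewrite (single_not_fd esym ecub c6) (fd_pair esym ecub c6 exu hI).
  by rewrite disjoints1 inE xu.
Qed.
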